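(* Let $\Omega\subset\mathbb{P}(\mathbb{R}^d)$ be a properly convex domain and let $g_n\in\mathrm{SL}^{\pm}(d,\mathbb{R})$ be a sequence with $g_n\Omega=\Omega$ for all $n$ and $\mu_{1,2}(g_n)\to\infty$. Then for every $x\in\Omega$, the set of accumulation points in $\mathbb{P}(\mathbb{R}^d)$ of the sequence $g_nx$ equals the set of accumulation points of the sequence $E_1^+(g_n)$.
   Context: A properly convex domain is the projectivization of an open convex cone whose closure lies in an affine chart. For $g\in\mathrm{GL}(d,\mathbb{R})$, $\sigma_1(g)\ge\dots\ge\sigma_d(g)$ are the eigenvalues of $\sqrt{gg^T}$ and $\mu_{1,2}(g)=\log\sigma_1(g)-\log\sigma_2(g)$. If $\sigma_1(g)>\sigma_2(g)$, $E_1^+(g)\in\mathbb{P}(\mathbb{R}^d)$ is the line spanned by the longest axis of the ellipsoid $\{gv:\|v\|=1\}$ (defined for all large $n$ here). *)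

(* Defs.v *)
From HB Require Import structures.
From mathcomp Require Import all_boot all_order all_algebra.
From mathcomp Require Import boolp classical_sets reals exp.
Set Implicit Arguments. Unset Strict Implicit. Unset Printing Implicit Defensive.
Import Order.TTheory GRing.Theory Num.Theory.
Local Open Scope ring_scope.
Local Open Scope classical_set_scope.

Section Defs.
Variables (R : realType) (d : nat).
Local Notation vec := 'cV[R]_d.

Definition enorm (v : vec) : R := Num.sqrt (\sum_i (v i 0) ^+ 2).

(* Metric on P(R^d) = lines of nonzero vectors:
   min ( |u/|u| - v/|v|| , |u/|u| + v/|v|| ). *)
Definition pdist (u v : vec) : R :=
  Num.min (enorm ((enorm u)^-1 *: u - (enorm v)^-1 *: v))
          (enorm ((enorm u)^-1 *: u + (enorm v)^-1 *: v)).

Definition proj_accum (v : nat -> vec) (u : vec) : Prop :=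
  u != 0 /\ forall eps : R, 0 < eps -> forall N : nat,
    exists n : nat, (N <= n)%N /\ pdist (v n) u < eps.

Definition open_set (C : set vec) : Prop :=
  forall v, C v -> exists eps : R, 0 < eps /\
    forall w, enorm (w - v) < eps -> C w.
Definition closure_set (C : set vec) : set vec :=
  fun v => forall eps : R, 0 < eps -> exists w, C w /\ enorm (w - v) < eps.
Definition convex_set (C : set vec) : Prop :=
  forall u w (t : R), C u -> C w -> 0 <= t -> t <= 1 -> C (t *: u + (1 - t) *: w).
Definition cone_set (C : set vec) : Prop :=
  forall v (t : R), C v -> 0 < t -> C (t *: v).

(* Omega = P(C) is properly convex: C is a nonempty open convex cone in
   R^d \ {0} whose closure (in P(R^d)) lies in an affine chart
   P(R^d) \ P(ker a) for some nonzero linear functional a. *)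
Definition properly_convex_cone (C : set vec) : Prop :=
  [/\ (exists v, C v) /\ ~ C 0, open_set C, convex_set C, cone_set C &
      (exists a : 'rV[R]_d, forall v, closure_set C v -> v != 0 ->
        (a *m v) 0 0 != 0)].

Definition in_proj (C : set vec) (v : vec) : Prop :=
  exists t : R, t != 0 /\ C (t *: v).

Definition preserves (C : set vec) (g : 'M[R]_d) : Prop :=
  forall v : vec, v != 0 -> (in_proj C (g *m v) <-> in_proj C v).

Definition in_SLpm (g : 'M[R]_d) : Prop := `|\det g| = 1.

Definition sorted_eigs_ggT (g : 'M[R]_d) (s : seq R) : Prop :=
  sorted (fun x y => y <= x) s /\
  char_poly (g *m g^T) = \prod_(x <- s) ('X - x%:P).

Definition eigs_ggT (g : 'M[R]_d) : seq R := xget [::] (sorted_eigs_ggT g).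

(* sigma_i(g), i >= 1, = sqrt of the i-th eigenvalue of g g^T *)
Definition sing_val (g : 'M[R]_d) (i : nat) : R :=
  Num.sqrt (nth 0 (eigs_ggT g) i.-1).

Definition mu12 (g : 'M[R]_d) : R := ln (sing_val g 1) - ln (sing_val g 2).

Definition longest_axis (g : 'M[R]_d) (w : vec) : Prop :=
  exists v : vec, enorm v = 1 /\ w = g *m v /\
    forall u : vec, enorm u = 1 -> enorm (g *m u) <= enorm (g *m v).

End Defs.

(* Main.v *)
Require Import Defs.
From HB Require Import structures.
From mathcomp Require Import all_boot all_order all_algebra.
From mathcomp Require Import boolp classical_sets reals exp.
From mathcomp Require Import topology normedtype matrix_normedtype.
From mathcomp Require Import ring lra.
Import Order.TTheory GRing.Theory Num.Theory.
Import numFieldTopology.Exports numFieldNormedType.Exports.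
Local Open Scope ring_scope.
Set Implicit Arguments. Unset Strict Implicit. Unset Printing Implicit Defensive.

Section Basics.
Variables (R : realType) (d : nat).
Local Notation vec := 'cV[R]_d.
Implicit Types u v w : vec.

Definition dot u v : R := \sum_i u i 0 * v i 0.

Lemma dotC u v : dot u v = dot v u.
Proof. by apply: eq_bigr => i _; rewrite mulrC. Qed.

Lemma dotDl u v w : dot (u + v) w = dot u w + dot v w.
Proof. by rewrite /dot -big_split; apply: eq_bigr => i _; rewrite mxE mulrDl. Qed.

Lemma dotZl (a : R) u w : dot (a *: u) w = a * dot u w.
Proof. by rewrite /dot mulr_sumr; apply: eq_bigr => i _; rewrite mxE mulrA. Qed.

Lemma dotNl u w : dot (- u) w = - dot u w.
Proof. by rewrite -scaleN1r dotZl mulN1r. Qed.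

Lemma dotBl u v w : dot (u - v) w = dot u w - dot v w.
Proof. by rewrite dotDl dotNl. Qed.

Lemma dotDr u v w : dot w (u + v) = dot w u + dot w v.
Proof. by rewrite !(dotC w) dotDl. Qed.
Lemma dotZr (a : R) u w : dot w (a *: u) = a * dot w u.
Proof. by rewrite !(dotC w) dotZl. Qed.
Lemma dotNr u w : dot w (- u) = - dot w u.
Proof. by rewrite !(dotC w) dotNl. Qed.
Lemma dotBr u v w : dot w (u - v) = dot w u - dot w v.
Proof. by rewrite !(dotC w) dotBl. Qed.
Lemma dot0l u : dot 0 u = 0.
Proof. by rewrite /dot big1 // => i _; rewrite mxE mul0r. Qed.
Lemma dot0r u : dot u 0 = 0.
Proof. by rewrite dotC dot0l. Qed.

Lemma dot_ge0 u : 0 <= dot u u.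
Proof. by apply: sumr_ge0 => i _; rewrite -expr2 sqr_ge0. Qed.

Lemma dot_eq0 u : dot u u = 0 -> u = 0.
Proof.
move=> h; apply/matrixP => i j; rewrite mxE (ord1 j).
have h2 : \sum_k (u k 0)^+2 = 0.
  by rewrite -[RHS]h /dot; apply: eq_bigr => k _; rewrite expr2.
have := psumr_eq0P (P:=xpredT) (fun k _ => sqr_ge0 (u k 0)) h2 (i:=i) isT.
by move/eqP; rewrite sqrf_eq0 => /eqP.
Qed.

Lemma enormE u : enorm u = Num.sqrt (dot u u).
Proof. by rewrite /enorm /dot; congr Num.sqrt; under eq_bigr do rewrite expr2. Qed.

Lemma enorm_ge0 u : 0 <= enorm u.
Proof. by rewrite enormE sqrtr_ge0. Qed.

Lemma enorm_sq u : enorm u ^+ 2 = dot u u.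
Proof. by rewrite enormE sqr_sqrtr // dot_ge0. Qed.

Lemma enorm_eq0 u : enorm u = 0 -> u = 0.
Proof.
move=> h; apply: dot_eq0; rewrite -enorm_sq h; by rewrite expr0n.
Qed.

Lemma enorm0 : enorm (0 : vec) = 0.
Proof. by rewrite enormE dot0l sqrtr0. Qed.

Lemma enorm_gt0 u : u != 0 -> 0 < enorm u.
Proof.
move=> h; rewrite lt_neqAle enorm_ge0 andbT; apply/eqP => /esym /enorm_eq0 h0.
by rewrite h0 eqxx in h.
Qed.

Lemma enormZ (a : R) u : enorm (a *: u) = `|a| * enorm u.
Proof.
rewrite !enormE dotZl dotZr mulrA -expr2 sqrtrM ?sqr_ge0 //.
by rewrite sqrtr_sqr.
Qed.

Lemma enormN u : enorm (- u) = enorm u.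
Proof. by rewrite -scaleN1r enormZ normrN normr1 mul1r. Qed.

Lemma enormB u v : enorm (u - v) = enorm (v - u).
Proof. by rewrite -enormN opprB. Qed.

Lemma CS_sq u v : dot u v ^+ 2 <= dot u u * dot v v.
Proof.
have [v0|vn0] := eqVneq v 0.
  by rewrite v0 dot0r dot0l expr0n /= mulr0.
have hv : 0 < dot v v.
  rewrite lt_neqAle dot_ge0 andbT; apply/eqP => /esym /dot_eq0 h.
  by rewrite h eqxx in vn0.
set t := dot u v / dot v v.
have := dot_ge0 (u - t *: v).
rewrite !(dotBl, dotBr, dotZl, dotZr) (dotC v u).
have e : t * dot v v = dot u v by rewrite /t mulfVK // gt_eqF.
move=> h.
have h' : 0 <= dot u u - t * dot u v by move: h; rewrite -mulrA e; lra.
have : 0 <= (dot u u - t * dot u v) * dot v v by apply: mulr_ge0 => //; exact: ltW.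
rewrite mulrBl -mulrA (mulrC (dot u v)) mulrA e; lra.
Qed.

Lemma CS u v : `|dot u v| <= enorm u * enorm v.
Proof.
rewrite !enormE -sqrtrM ?dot_ge0 // -sqrtr_sqr ler_sqrt ?CS_sq //.
by apply: mulr_ge0; apply: dot_ge0.
Qed.

Lemma enormD u v : enorm (u + v) <= enorm u + enorm v.
Proof.
rewrite -[enorm (u+v)]ger0_norm ?enorm_ge0 // -[enorm u + enorm v]ger0_norm;
  last by apply: addr_ge0; apply: enorm_ge0.
rewrite -ler_sqr ?nnegrE ?normr_ge0 // !real_normK ?num_real //.
rewrite enorm_sq dotDl !dotDr (dotC v u) sqrrD !enorm_sq.
have := CS u v; have := ler_norm (dot u v); lra.
Qed.

Lemma enormBle u v : enorm (u - v) <= enorm u + enorm v.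
Proof. by rewrite -(enormN v) enormD. Qed.

Lemma enorm_rev u v : enorm u - enorm v <= enorm (u - v).
Proof.
have := enormD (u - v) v; rewrite subrK; lra.
Qed.

Lemma coord_le u i : `|u i 0| <= enorm u.
Proof.
rewrite enormE -sqrtr_sqr ler_sqrt ?dot_ge0 // /dot (bigD1 i) //=.
rewrite -expr2 lerDl; apply: sumr_ge0 => k _; rewrite -expr2; exact: sqr_ge0.
Qed.


Definition hat u : vec := (enorm u)^-1 *: u.

Lemma enorm_hat u : u != 0 -> enorm (hat u) = 1.
Proof.
move=> h; rewrite /hat enormZ ger0_norm ?invr_ge0 ?enorm_ge0 // mulVf //.
by rewrite gt_eqF // enorm_gt0.
Qed.

Lemma enorm_diff_le u v : `|enorm u - enorm v| <= enorm (u - v).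
Proof.
rewrite ler_norml enorm_rev andbT.
have := enorm_rev v u; rewrite enormB; lra.
Qed.

Lemma hat_bound (a b : vec) : b != 0 ->
  enorm (hat a - hat b) <= 2 * enorm (a - b) / enorm b.
Proof.
move=> bn0; have hb := enorm_gt0 bn0.
have hbi : 0 <= (enorm b)^-1 by rewrite invr_ge0 ltW.
have -> : hat a - hat b = ((enorm a)^-1 - (enorm b)^-1) *: a + (enorm b)^-1 *: (a - b).
  by rewrite /hat scalerBl scalerBr addrA subrK.
apply: le_trans (enormD _ _) _.
rewrite !enormZ (ger0_norm hbi).
have [a0|an0] := eqVneq a 0.
  rewrite a0 enorm0 mulr0 add0r.
  have h := mulr_ge0 hbi (enorm_ge0 (0 - b)); rewrite -mulrA (mulrC (enorm _)); lra.
have ha := enorm_gt0 an0.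
have -> : `|(enorm a)^-1 - (enorm b)^-1| * enorm a = `|enorm b - enorm a| / enorm b.
  have e : ((enorm a)^-1 - (enorm b)^-1) * enorm a = (enorm b - enorm a) / enorm b.
    by rewrite mulrBl mulVf ?gt_eqF // mulrBl mulfV ?gt_eqF // mulrC.
  transitivity (`|((enorm a)^-1 - (enorm b)^-1) * enorm a|).
    by rewrite normrM (ger0_norm (ltW ha)).
  by rewrite e normrM (ger0_norm hbi).
have h1 := enorm_diff_le b a; rewrite enormB in h1.
have h2 : 0 <= (enorm (a - b) - `|enorm b - enorm a|) * (enorm b)^-1.
  by apply: mulr_ge0 => //; lra.
have h3 := mulr_ge0 hbi (enorm_ge0 (a - b)).
nra.
Qed.

Lemma pdist_le1 (a b : vec) : pdist a b <= enorm (hat a - hat b).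
Proof. by rewrite /pdist /hat ge_min lexx. Qed.
Lemma pdist_le2 (a b : vec) : pdist a b <= enorm (hat a + hat b).
Proof. by rewrite /pdist /hat ge_min lexx orbT. Qed.
Lemma pdist_cases (a b : vec) : pdist a b = enorm (hat a - hat b) \/ pdist a b = enorm (hat a + hat b).
Proof. by rewrite /pdist /Num.min; case: ifP => _; [left|right]. Qed.

Lemma pdistC (a b : vec) : pdist a b = pdist b a.
Proof. by rewrite /pdist enormB (addrC ((enorm b)^-1 *: b) ((enorm a)^-1 *: a)). Qed.

Lemma pdist_tri (a b c : vec) : pdist a c <= pdist a b + pdist b c.
Proof.
case: (pdist_cases a b) => ->; case: (pdist_cases b c) => ->.
- apply: le_trans (pdist_le1 _ _) _.
  have -> : hat a - hat c = (hat a - hat b) + (hat b - hat c) by rewrite addrA subrK.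
  exact: enormD.
- apply: le_trans (pdist_le2 _ _) _.
  have -> : hat a + hat c = (hat a - hat b) + (hat b + hat c) by rewrite addrA subrK.
  exact: enormD.
- apply: le_trans (pdist_le2 _ _) _.
  have -> : hat a + hat c = (hat a + hat b) - (hat b - hat c) by rewrite opprB addrA addrAC addrK.
  exact: enormBle.
- apply: le_trans (pdist_le1 _ _) _.
  have -> : hat a - hat c = (hat a + hat b) - (hat b + hat c) by rewrite opprD addrA addrK.
  exact: enormBle.
Qed.

Lemma enorm_le_sum u : enorm u <= \sum_i `|u i 0|.
Proof.
rewrite enormE -[X in _ <= X]ger0_norm ?sumr_ge0 // -sqrtr_sqr ler_sqrt ?sqr_ge0 //.
rewrite expr2 mulr_suml /dot; apply: ler_sum => i _.
apply: le_trans (ler_norm _) _; rewrite normrM ler_wpM2l ?normr_ge0 //.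
by rewrite (bigD1 i) //= lerDl; apply: sumr_ge0.
Qed.

End Basics.

Section LinAlg.
Variables (R : realType) (d : nat).
Local Notation vec := 'cV[R]_d.
Implicit Types u v w : vec.

Lemma dot_mx u w : u^T *m w = (dot u w)%:M.
Proof.
apply/matrixP => i j; rewrite (ord1 i) (ord1 j) !mxE /= mulr1n.
by apply: eq_bigr => k _; rewrite mxE.
Qed.

Lemma dot_mulmx (g : 'M[R]_d) u w : dot (g *m u) w = dot u (g^T *m w).
Proof.
have h : forall a b : vec, dot a b = (a^T *m b) 0 0 by move=> a b; rewrite dot_mx mxE mulr1n.
by rewrite !h trmx_mul -mulmxA.
Qed.

Lemma mxtrace1 (A : 'M[R]_1) : \tr A = A 0 0.
Proof. by rewrite /mxtrace big_ord1. Qed.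

Lemma tr_sq_ge0 (A : 'M[R]_d) : 0 <= \tr (A *m A^T).
Proof.
apply: sumr_ge0 => i _; rewrite mxE; apply: sumr_ge0 => j _.
by rewrite mxE -expr2 sqr_ge0.
Qed.

Lemma tr_rank1 u : \tr (u *m u^T) = dot u u.
Proof. by rewrite mxtrace_mulC mxtrace1 dot_mx mxE mulr1n. Qed.


Lemma frob_bound (g : 'M[R]_d) u v : dot v v = 1 -> dot u u = 1 -> dot u v = 0 ->
  dot (g *m v) (g *m v) + dot (g *m u) (g *m u) <= \tr (g *m g^T).
Proof.
move=> hv hu huv.
set P := v *m v^T + u *m u^T.
set Q := 1%:M - P.
have PT : P^T = P by rewrite /P linearD /= !trmx_mul !trmxK.
have QT : Q^T = Q by rewrite /Q linearB /= PT trmx1.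
have PP : P *m P = P.
  rewrite /P mulmxDl !mulmxDr !mulmxA -!(mulmxA v) -!(mulmxA u) !dot_mx.
  rewrite (dotC v u) hv hu huv !mul_scalar_mx !scale1r !scale0r !mulmx0 addr0 add0r.
  done.
have QQ : Q *m Q^T = Q.
  by rewrite QT /Q mulmxBl mul1mx mulmxBr mulmx1 PP subrr subr0.
have h0 := tr_sq_ge0 (g *m Q).
rewrite trmx_mul QT -mulmxA (mulmxA Q) -{2}QT QQ in h0.
have e : \tr (g *m (Q *m g^T)) = \tr (g *m g^T) - (dot (g *m v) (g *m v) + dot (g *m u) (g *m u)).
  rewrite /Q mulmxBl mul1mx mulmxBr linearB /=; congr (_ - _).
  rewrite /P !mulmxDl !mulmxDr linearD /= -!tr_rank1.
  by rewrite !trmx_mul !mulmxA.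
rewrite e in h0; lra.
Qed.

Section OneMatrix.
Variables (g : 'M[R]_d) (v : vec).
Hypothesis hv1 : enorm v = 1.
Hypothesis hmax : forall u, enorm u = 1 -> enorm (g *m u) <= enorm (g *m v).
Let sig := enorm (g *m v).

Lemma opnorm u : enorm (g *m u) <= sig * enorm u.
Proof.
have [->|un0] := eqVneq u 0; first by rewrite mulmx0 enorm0 mulr0.
have hu := enorm_gt0 un0.
have := hmax (enorm_hat un0); rewrite /hat -scalemxAr enormZ.
rewrite ger0_norm ?invr_ge0 ?(ltW hu) // -/sig => h.
by rewrite -ler_pdivrMr // mulrC.
Qed.

Lemma root_le (lam : R) : root (char_poly (g *m g^T)) lam -> lam <= sig ^+ 2.
Proof.
rewrite -eigenvalue_root_char => /eigenvalueP [r hr rn0].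
set u := r^T.
have un0 : u != 0 by apply: contraNneq rn0 => h; rewrite -(trmxK r) -/u h trmx0.
have hS : g *m (g^T *m u) = lam *: u.
  by rewrite mulmxA /u -[g *m g^T]trmxK trmx_mul trmxK -trmx_mul hr linearZ.
set z := g^T *m u.
have hz : dot z z = lam * dot u u.
  by rewrite {1}/z dot_mulmx trmxK hS dotZr.
have hgz : dot (g *m z) (g *m z) = lam ^+ 2 * dot u u.
  by rewrite /z hS dotZl dotZr mulrA -expr2.
have hb := opnorm z.
have hdu : 0 < dot u u by rewrite -enorm_sq exprn_gt0 // enorm_gt0.
have hs0 : 0 <= sig by apply: enorm_ge0.
have : dot (g *m z) (g *m z) <= sig ^+ 2 * dot z z.
  rewrite -!enorm_sq -exprMn ler_pXn2r ?nnegrE ?enorm_ge0 //.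
  by apply: mulr_ge0 => //; apply: enorm_ge0.
rewrite hgz hz mulrA -subr_ge0 -mulrBl pmulr_lge0 // => h.
have [lp|ln] := ltP 0 lam; last by have := sqr_ge0 sig; lra.
have : 0 <= (sig ^+ 2 - lam) * lam by nra.
by rewrite pmulr_lge0 // subr_ge0.
Qed.


Lemma sum_le_size (t : seq R) (b : R) : all (fun y => y <= b) t ->
  \sum_(x <- t) x <= (size t)%:R * b.
Proof.
elim: t => [|y t IH] /=; first by rewrite big_nil mul0r.
move=> /andP [hy ht]; rewrite big_cons -addn1 natrD mulrDl mul1r addrC.
by apply: lerD => //; apply: IH.
Qed.

Lemma second_bound (s : seq R) : (2 <= d)%N ->
  sorted (fun x y => y <= x) s ->
  char_poly (g *m g^T) = \prod_(x <- s) ('X - x%:P) ->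
  nth 0 s 0 <= sig ^+ 2 /\
  forall u, dot u v = 0 -> enorm (g *m u) ^+ 2 <= (d.-1)%:R * nth 0 s 1 * enorm u ^+ 2.
Proof.
move=> hd hs he.
have hd0 : (0 < d)%N by apply: leq_trans hd.
have sz : size s = d.
  by have := size_char_poly (g *m g^T); rewrite he size_prod_XsubC => -[].
have tr : \tr (g *m g^T) = \sum_(x <- s) x.
  have := char_poly_trace (g *m g^T) hd0; rewrite he.
  have -> : d.-1 = (size s).-1 by rewrite sz.
  rewrite coefPn_prod_XsubC.
    by move/oppr_inj.
  by rewrite sz -lt0n.
case: s hs he sz tr => [|a [|b t]] hs he sz tr; rewrite -sz in hd => //.
have ha : a <= sig ^+ 2.
  by apply: root_le; rewrite he root_prod_XsubC mem_head.
split => // u huv /=.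
move: hs => /= /andP [hab hpath].
have hall : all (fun y => y <= b) t.
  have := @order_path_min _ (fun x y => y <= x) _ _ _ hpath.
  by apply => x y z h1 h2; apply: le_trans h2 h1.
have hsum := sum_le_size hall.
have [->|un0] := eqVneq u 0.
  by rewrite mulmx0 enorm0 expr0n /= mulr0.
have hu := enorm_gt0 un0.
have hv : dot v v = 1 by rewrite -enorm_sq hv1 expr1n.
have e1 : dot (hat u) (hat u) = 1 by rewrite -enorm_sq enorm_hat // expr1n.
have huv' : dot (hat u) v = 0 by rewrite /hat dotZl huv mulr0.
have := frob_bound g hv e1 huv'.
rewrite tr !big_cons /hat -scalemxAr dotZl dotZr mulrA -expr2 exprVn -!enorm_sq -/sig.
have -> : d.-1 = (size t).+1 by rewrite -sz.
move=> h.
have h2 : enorm (g *m u) ^+ 2 / enorm u ^+ 2 <= b + (size t)%:R * b.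
  rewrite mulrC; lra.
rewrite ler_pdivrMr ?exprn_gt0 // in h2.
apply: le_trans h2 _.
suff -> : (size t).+1%:R * b * enorm u ^+ 2 = (b + (size t)%:R * b) * enorm u ^+ 2 by [].
by rewrite -addn1 natrD; ring.
Qed.
End OneMatrix.

End LinAlg.

Section Cluster.
Local Open Scope classical_set_scope.
Variables (R : realType) (d : nat).
Local Notation vec := 'cV[R]_d.

Lemma cluster_seq (f : nat -> vec) : (forall k, enorm (f k) = 1) ->
  exists u : vec, forall eta : R, 0 < eta -> forall N : nat,
    exists k, (N <= k)%N /\ enorm (u - f k) < eta.
Proof.
move=> hf.
pose K := [set v : 'rV[R]_d | forall i, `[(-1 : R), 1]%classic (v ord0 i)].
have cK : compact K.
  by apply: (@rV_compact _ _ (fun=> `[(-1 : R), 1]%classic)) => _; exact: segment_compact.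
have FK : ((fun k => (f k)^T) @ \oo) K.
  have h : forall k, K (f k)^T.
    move=> k i /=; rewrite mxE in_itv /= -ler_norml.
    by rewrite -(hf k); apply: coord_le.
  exact: (@filterE nat \oo _ (fun k => K (f k)^T) h).
have [p [Kp clp]] := cK _ _ FK.
exists p^T => eta heta N.
set e := eta / (d%:R + 1).
have he : 0 < e by apply: divr_gt0 => //; rewrite ltr_wpDl.
have FA : ((fun k => (f k)^T) @ \oo) [set y | exists k, (N <= k)%N /\ y = (f k)^T].
  by apply: filterS (nbhs_infty_ge N) => k hk; exists k.
have [y [[k [hk ->]] hb]] := clp _ _ FA (nbhsx_ballx p e he).
exists k; split => //.
apply: le_lt_trans (enorm_le_sum _) _.
case: hb => _ hb.
apply: (@le_lt_trans _ _ (\sum_(i < d) e)).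
  apply: ler_sum => i _; have := hb 0 i; rewrite /ball /= !mxE.
  by move=> h; apply: ltW.
rewrite sumr_const card_ord /e -[_ *+ d]mulr_natr mulrAC ltr_pdivrMr ?ltr_wpDl //.
by rewrite mulrDr mulr1 ltrDl.
Qed.

End Cluster.

Section Small.
Variable R : realType.
Lemma small_inv (eps : R) : 0 < eps -> exists N : nat, forall k, (N <= k)%N -> k.+1%:R^-1 < eps.
Proof.
move=> he; exists (Num.Def.archi_bound eps^-1) => k hk.
have hi : 0 <= eps^-1 by rewrite invr_ge0 ltW.
have h1 := @archi_boundP _ eps^-1 hi.
rewrite -[eps in _ < eps]invrK ltf_pV2 ?posrE ?invr_gt0 ?ltr0Sn //.
apply: lt_le_trans h1 _; rewrite ler_nat; exact: leq_trans hk (leqnSn k).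
Qed.
End Small.

Section Cone.
Local Open Scope classical_set_scope.
Variables (R : realType) (d : nat).
Local Notation vec := 'cV[R]_d.
Variables (C : set vec).
Hypothesis hn0 : ~ C 0.
Hypothesis hconv : convex_set C.
Hypothesis hcone : cone_set C.

Lemma C_closure c : C c -> closure_set C c.
Proof. by move=> hc eps he; exists c; split => //; rewrite subrr enorm0. Qed.

Lemma C_neq0 c : C c -> c != 0.
Proof. by move=> hc; apply/eqP => h; apply: hn0; rewrite -h. Qed.

Lemma sign_fix (a : 'rV[R]_d) : (exists v, C v) ->
  (forall v, closure_set C v -> v != 0 -> (a *m v) 0 0 != 0) ->
  exists al : vec, (forall c, C c -> 0 < dot al c) /\
    (forall v, closure_set C v -> v != 0 -> dot al v != 0).
Proof.
move=> [c0 hc0] ha.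
have ea : forall v, (a *m v) 0 0 = dot a^T v.
  by move=> v; rewrite mxE; apply: eq_bigr => i _; rewrite mxE.
have hcl : forall v, closure_set C v -> v != 0 -> dot a^T v != 0.
  by move=> v h1 h2; rewrite -ea; apply: ha.
pose al : vec := if 0 < dot a^T c0 then a^T else - a^T.
have hal : forall v, dot al v = (if 0 < dot a^T c0 then 1 else -1) * dot a^T v.
  by move=> v; rewrite /al; case: ifP => _; rewrite ?mul1r ?dotNl ?mulN1r.
have hcl' : forall v, closure_set C v -> v != 0 -> dot al v != 0.
  move=> v h1 h2; rewrite hal mulf_eq0 negb_or hcl // andbT.
  by case: ifP => _; rewrite ?oppr_eq0 oner_eq0.
have h0 : 0 < dot al c0.
  rewrite hal; case: ifP => [h|/negbT]; first by rewrite mul1r.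
  rewrite -leNgt => hle.
  have hne := hcl _ (C_closure hc0) (C_neq0 hc0).
  by rewrite mulN1r oppr_gt0 lt_neqAle hne hle.
exists al; split => // c hc.
have hne := hcl' _ (C_closure hc) (C_neq0 hc).
rewrite lt_neqAle eq_sym hne /=; rewrite leNgt; apply/negP => hlt.
set A := dot al c; set A0 := dot al c0.
have hden : A - A0 < 0 by rewrite /A /A0; lra.
set t := A / (A - A0).
have ht0 : 0 <= t by rewrite /t ler_ndivlMr // mul0r; apply: ltW.
have ht1 : t <= 1.
  rewrite /t ler_ndivrMr // mul1r; rewrite /A /A0; lra.
have hz := hconv hc0 hc ht0 ht1.
have : dot al (t *: c0 + (1 - t) *: c) = 0.
  rewrite dotDr !dotZr -/A -/A0 /t.
  have hd : A - A0 != 0 by rewrite lt_eqF.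
  by field.
by move/eqP; apply/negP; apply: hcl' _ (C_closure hz) (C_neq0 hz).
Qed.

Variable al : vec.
Hypothesis hpos : forall c, C c -> 0 < dot al c.
Hypothesis hcl : forall v, closure_set C v -> v != 0 -> dot al v != 0.

Lemma closure_ge0 v : closure_set C v -> 0 <= dot al v.
Proof.
move=> hv; rewrite leNgt; apply/negP => hlt.
set eps := - dot al v / (enorm al + 1).
have hen := enorm_ge0 al.
have he : 0 < eps by apply: divr_gt0; lra.
have [w [hw hd]] := hv eps he.
have hp := hpos hw.
have e : dot al w = dot al v + dot al (w - v) by rewrite dotBr addrC subrK.
have h1 : dot al (w - v) <= enorm al * enorm (w - v).
  by apply: le_trans (ler_norm _) (CS _ _).
have h2 : enorm al * enorm (w - v) <= enorm al * eps.
  by apply: ler_wpM2l => //; apply: ltW.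
have h3 : (enorm al + 1) * eps = - dot al v by rewrite /eps mulrC divfK //; lra.
have h4 : enorm al * eps < (enorm al + 1) * eps by rewrite mulrDl mul1r ltrDl.
lra.
Qed.

Lemma PC : exists2 del : R, 0 < del & forall u c1 c2, enorm u = 1 -> C c1 -> C c2 ->
  enorm (c1 - u) < del -> enorm (c2 + u) < del -> False.
Proof.
apply: contrapT => hno.
have H : forall k : nat, exists u : vec, enorm u = 1 /\ exists c1 c2, C c1 /\ C c2 /\
    enorm (c1 - u) < k.+1%:R^-1 /\ enorm (c2 + u) < k.+1%:R^-1.
  move=> k; apply: contrapT => hk; apply: hno; exists k.+1%:R^-1; first by rewrite invr_gt0 ltr0Sn.
  move=> u c1 c2 hu h1 h2 hd1 hd2.
  by apply: hk; exists u; split => //; exists c1, c2.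
have [f hf] := choice H.
have [u hu] := cluster_seq (fun k => proj1 (hf k)).
have key : forall s : R, (s = 1 \/ s = -1) -> closure_set C (s *: u).
  move=> s hs eps he.
  have he2 : 0 < eps / 2 by apply: divr_gt0.
  have [N hN] := small_inv he2.
  have [k [hk hk2]] := hu _ he2 N.
  have [_ [c1 [c2 [h1 [h2 [h3 h4]]]]]] := hf k.
  have hk3 := hN _ hk.
  have hus : enorm (s *: u - s *: f k) < eps / 2.
    by rewrite -scalerBr enormZ; case: hs => ->; rewrite ?normrN normr1 mul1r.
  case: hs => hs.
  - exists c1; split => //.
    have -> : c1 - s *: u = (c1 - f k) - (s *: u - s *: f k) by rewrite hs !scale1r opprB addrA subrK.
    apply: le_lt_trans (enormBle _ _) _. have h5 := lt_trans h3 hk3; lra.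
  - exists c2; split => //.
    have -> : c2 - s *: u = (c2 + f k) - (s *: u - s *: f k) by rewrite hs !scaleN1r !opprK opprD opprK addrCA addrK addrC.
    apply: le_lt_trans (enormBle _ _) _; have h5 := lt_trans h4 hk3; lra.
have un0 : u != 0.
  apply/eqP => u0.
  have h12 : (0:R) < 1/2 by lra.
  have [k [_ hk]] := hu (1/2) h12 0%N.
  by move: hk; rewrite u0 sub0r enormN (proj1 (hf k)); lra.
have hp1 := closure_ge0 (key 1 (or_introl erefl)).
have hp2 := closure_ge0 (key (-1) (or_intror erefl)).
rewrite scale1r in hp1; rewrite scaleN1r dotNr in hp2.
have : dot al u = 0 by lra.
by apply/eqP; apply: hcl => //; have := key 1 (or_introl erefl); rewrite scale1r.
Qed.

End Cone.

Section PartA.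
Variables (R : realType) (d : nat).
Local Notation vec := 'cV[R]_d.

Lemma ln_ge0 (K : R) : 1 <= K -> 0 <= ln K.
Proof.
move=> hK; rewrite -[X in X <= _](@expRK R 0) expR0 ler_ln ?posrE //; lra.
Qed.

Lemma sorted_12 (s : seq R) : sorted (fun x y => y <= x) s -> nth 0 s 1 <= nth 0 s 0 \/ nth 0 s 1 = 0.
Proof.
case: s => [|a [|b t]] /=; try by right.
by move=> /andP [h _]; left.
Qed.

Lemma partA_one (g : 'M[R]_d) (v : vec) (K : R) : (2 <= d)%N ->
  enorm v = 1 -> (forall u, enorm u = 1 -> enorm (g *m u) <= enorm (g *m v)) ->
  1 <= K -> ln K < mu12 g ->
  forall u, dot u v = 0 -> K ^+ 2 * enorm (g *m u) ^+ 2 <= (d.-1)%:R * enorm (g *m v) ^+ 2 * enorm u ^+ 2.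
Proof.
move=> hd hv hmax hK hmu u huv.
have hK0 : 0 < K by lra.
have hlnK := ln_ge0 hK.
case: (pselect (exists s, sorted_eigs_ggT g s)) => [hex|hnex]; last first.
  exfalso; move: hmu; rewrite /mu12 /sing_val /eigs_ggT xgetPN /=.
    by rewrite sqrtr0 subrr; lra.
  by move=> s hs; apply: hnex; exists s.
have [hs he] := xgetPex [::] hex.
move: hmu; rewrite /mu12 /sing_val -/(eigs_ggT g) /=.
move: hs he; set s := eigs_ggT g => hs he hmu.
have [hl1 hb] := second_bound hv hmax hd hs he.
have hb' := hb u huv.
set l1 := nth 0 s 0 in hl1 hmu; set l2 := nth 0 s 1 in hb hb' hmu.
have hsig := sqr_ge0 (enorm (g *m v)).
have hu2 := sqr_ge0 (enorm u).
have hgu := sqr_ge0 (enorm (g *m u)).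
have hdd : (0 <= (d.-1)%:R :> R) by apply: ler0n.
have [l2le0|l2gt0] := leP l2 0.
  have : (d.-1)%:R * l2 * enorm u ^+ 2 <= 0.
    by rewrite -mulrA mulr_ge0_le0 // mulr_le0_ge0.
  move=> h; have h2 : enorm (g *m u) ^+ 2 = 0 by lra.
  rewrite h2 mulr0; apply: mulr_ge0 => //; apply: mulr_ge0 => //.
have l12 : l2 <= l1 by case: (sorted_12 hs) => // h; rewrite -/l2 -/l1 in h; lra.
have l1gt0 : 0 < l1 by lra.
have hsq1 : 0 < Num.sqrt l1 by rewrite sqrtr_gt0.
have hsq2 : 0 < Num.sqrt l2 by rewrite sqrtr_gt0.
have : ln (K * Num.sqrt l2) < ln (Num.sqrt l1).
  by rewrite lnM ?posrE //; lra.
rewrite ltr_ln ?posrE ?mulr_gt0 // => hlt.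
have hKl : K ^+ 2 * l2 < l1.
  have := hlt; rewrite -ltr_sqr ?nnegrE ?mulr_ge0 ?sqrtr_ge0 ?(ltW hK0) //.
  by rewrite exprMn !sqr_sqrtr // ltW.
have hK2 := sqr_ge0 K.
have e1 : K ^+ 2 * enorm (g *m u) ^+ 2 <= K ^+ 2 * ((d.-1)%:R * l2 * enorm u ^+ 2).
  by apply: ler_wpM2l.
apply: le_trans e1 _.
have h3 : (d.-1)%:R * (K^+2 * l2) * enorm u ^+ 2 <= (d.-1)%:R * enorm (g *m v) ^+ 2 * enorm u ^+ 2.
  by apply: ler_wpM2r => //; apply: ler_wpM2l => //; lra.
apply: le_trans h3; rewrite le_eqVlt; apply/orP; left; apply/eqP; ring.
Qed.


Lemma partA_seq (g : nat -> 'M[R]_d) (vv : nat -> vec) : (2 <= d)%N ->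
  (forall n, enorm (vv n) = 1) ->
  (forall n u, enorm u = 1 -> enorm (g n *m u) <= enorm (g n *m vv n)) ->
  (forall M : R, exists N : nat, forall n, (N <= n)%N -> M < mu12 (g n)) ->
  forall eta : R, 0 < eta -> exists N : nat, forall n, (N <= n)%N ->
    forall u, dot u (vv n) = 0 -> enorm (g n *m u) <= eta * enorm (g n *m vv n) * enorm u.
Proof.
move=> hd hv hmax hmu eta heta.
set K := (d%:R + 1) / eta + 1.
have hd0 : (0 <= d%:R :> R) by apply: ler0n.
have hK1 : 1 <= K by rewrite /K lerDr; apply: divr_ge0 => //; lra.
have heK : eta * K = d%:R + 1 + eta by rewrite /K mulrDr mulr1 mulrC divfK ?gt_eqF.
have [N hN] := hmu (ln K).
exists N => n hn u huv.
have h := partA_one hd (hv n) (@hmax n) hK1 (hN n hn) huv.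
have hdd : ((d.-1)%:R <= d%:R :> R) by rewrite ler_nat leq_pred.
have hdd0 : (0 <= (d.-1)%:R :> R) by apply: ler0n.
have hx : (d.-1)%:R <= (eta * K) ^+ 2 by rewrite heK; nra.
set S := enorm (g n *m vv n) ^+ 2 in h.
set U := enorm u ^+ 2 in h.
have hS : 0 <= S by apply: sqr_ge0.
have hU : 0 <= U by apply: sqr_ge0.
have h2 : (d.-1)%:R * S * U <= (eta * K) ^+ 2 * S * U.
  by apply: ler_wpM2r => //; apply: ler_wpM2r.
have hK0 : 0 < K ^+ 2 by apply: exprn_gt0; lra.
have h3 : enorm (g n *m u) ^+ 2 <= (eta * enorm (g n *m vv n) * enorm u) ^+ 2.
  rewrite -(ler_pM2l hK0); apply: le_trans h (le_trans h2 _).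
  by rewrite /S /U !exprMn le_eqVlt; apply/orP; left; apply/eqP; ring.
rewrite -ler_sqr ?nnegrE //; first by apply: enorm_ge0.
by apply: mulr_ge0; [apply: mulr_ge0; [lra|apply: enorm_ge0]|apply: enorm_ge0].
Qed.
End PartA.

Section Signs.
Variables (R : realType) (d : nat).
Local Notation vec := 'cV[R]_d.
Variables (C : set vec) (al : vec).
Hypothesis hn0 : ~ C 0.
Hypothesis hconv : convex_set C.
Hypothesis hcone : cone_set C.
Hypothesis hpos : forall c, C c -> 0 < dot al c.
Variable g : 'M[R]_d.
Hypothesis hpres : preserves C g.

Let F z := dot al (g *m z).

Lemma dir_exists z : C z -> exists t : R, t != 0 /\ C (t *: (g *m z)).
Proof.
move=> hz; apply: (hpres (C_neq0 hn0 hz)).2.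
by exists 1; split; [exact: oner_neq0 | rewrite scale1r].
Qed.

Lemma F_neq0 z : C z -> F z != 0.
Proof.
move=> hz; have [t [tn0 ht]] := dir_exists hz.
have := hpos ht; rewrite dotZr -/(F z) => h.
by apply/eqP => h0; rewrite h0 mulr0 ltxx in h.
Qed.

Lemma posdir z s : C z -> 0 < s * F z -> C (s *: (g *m z)).
Proof.
move=> hz hs; have [t [tn0 ht]] := dir_exists hz.
have := hpos ht; rewrite dotZr -/(F z) => htF.
have Fn0 := F_neq0 hz.
have e : s / t = (s * F z) / (t * F z) by field; rewrite Fn0 tn0.
have hst : 0 < s / t by rewrite e divr_gt0.
have := hcone ht hst; rewrite scalerA divfK //.
Qed.

Lemma same_sign y y' : C y -> C y' -> 0 < F y * F y'.
Proof.
move=> hy hy'; have hB := F_neq0 hy; have hA := F_neq0 hy'.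
rewrite lt_neqAle eq_sym (mulf_neq0 hB hA) /= leNgt; apply/negP => hneg'.
set A := F y' in hA hneg'; set B := F y in hB hneg'.
have hD : A - B != 0.
  apply/eqP => h; have e : A = B by lra.
  by rewrite e in hneg'; have := sqr_ge0 B; rewrite expr2; lra.
have hD2 : 0 < (A - B) ^+ 2 by rewrite lt_neqAle eq_sym sqrf_eq0 hD sqr_ge0.
set t := A / (A - B).
have et : t = (A ^+ 2 - A * B) / (A - B) ^+ 2 by rewrite /t; field.
have e1t : 1 - t = (B ^+ 2 - A * B) / (A - B) ^+ 2 by rewrite /t; field.
have ht0 : 0 <= t by rewrite et divr_ge0 //; [nra|exact: ltW].
have ht1 : t <= 1.
  have : 0 <= 1 - t by rewrite e1t divr_ge0 //; [nra|exact: ltW].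
  lra.
have hz := hconv hy hy' ht0 ht1.
have := F_neq0 hz.
rewrite /F mulmxDr -!scalemxAr dotDr !dotZr -/(F y) -/(F y') -/A -/B /t.
by apply/negP; rewrite negbK; apply/eqP; field.
Qed.

Lemma sign_g y y' : C y -> C y' ->
  exists s : R, `|s| = 1 /\ C (s *: (g *m y)) /\ C (s *: (g *m y')).
Proof.
move=> hy hy'; have hss := same_sign hy hy'; have hB := F_neq0 hy.
have [hp|hn] := ltP 0 (F y).
  exists 1; rewrite normr1; split => //; split; apply: posdir; rewrite ?mul1r //.
  by rewrite -(pmulr_rgt0 _ hp).
have hn' : F y < 0 by rewrite lt_neqAle hB hn.
exists (-1); rewrite normrN normr1; split => //; split; apply: posdir; rewrite ?mulN1r ?oppr_gt0 //.
by rewrite -(nmulr_rgt0 _ hn').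
Qed.

End Signs.

Section Key.
Variables (R : realType) (d : nat).
Local Notation vec := 'cV[R]_d.
Variables (C : set vec) (al : vec).
Hypothesis hn0 : ~ C 0.
Hypothesis hconv : convex_set C.
Hypothesis hcone : cone_set C.
Hypothesis hpos : forall c, C c -> 0 < dot al c.
Variable g : 'M[R]_d.
Hypothesis hpres : preserves C g.
Variable v : vec.
Hypothesis hv : enorm v = 1.
Hypothesis hsig : 0 < enorm (g *m v).
Variable eta : R.
Hypothesis heta : 0 < eta.
Hypothesis hetab : forall u, dot u v = 0 -> enorm (g *m u) <= eta * enorm (g *m v) * enorm u.
Variable x : vec.

Let p := dot x v.
Let xp := x - p *: v.
Let sg := enorm (g *m v).

Lemma xp_orth : dot xp v = 0.
Proof. by rewrite /xp dotBl dotZl -enorm_sq hv expr1n mulr1 subrr. Qed.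

Lemma p_le : `|p| <= enorm x.
Proof. by have := CS x v; rewrite hv mulr1. Qed.

Lemma xp_le : enorm xp <= 2 * enorm x.
Proof.
apply: le_trans (enormBle _ _) _; rewrite enormZ hv mulr1.
have := p_le; lra.
Qed.

Lemma gxp_le : enorm (g *m xp) <= 2 * eta * sg * enorm x.
Proof.
apply: le_trans (hetab xp_orth) _.
have h1 : 0 <= eta * sg by apply: mulr_ge0; [exact: ltW|apply: enorm_ge0].
have := ler_wpM2l h1 xp_le; rewrite -/sg; lra.
Qed.

Lemma decomp (q : R) : g *m (x + q *: v) = (p + q) *: (g *m v) + g *m xp.
Proof.
rewrite scalemxAr -mulmxDr; congr (g *m _).
by apply/matrixP => i j; rewrite /xp !mxE; ring.
Qed.

Lemma lin_id1 (G X : vec) (a sn t : R) : a != 0 -> t != 0 ->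
  (a * t)^-1 *: (sn *: (a *: G + X)) - (sn / t) *: G = ((a * t)^-1 * sn) *: X.
Proof. by move=> ha hs; apply/matrixP => i j; rewrite !mxE; field; rewrite ha hs. Qed.

Lemma lin_id2 (G X : vec) (b sn t : R) : b != 0 -> t != 0 ->
  (b * t)^-1 *: (sn *: ((- b) *: G + X)) + (sn / t) *: G = ((b * t)^-1 * sn) *: X.
Proof. by move=> ha hs; apply/matrixP => i j; rewrite !mxE; field; rewrite ha hs. Qed.

Lemma key_single (del : R) : 0 < del ->
  (forall u c1 c2, enorm u = 1 -> C c1 -> C c2 ->
     enorm (c1 - u) < del -> enorm (c2 + u) < del -> False) ->
  C x -> forall r : R, 0 < r -> (forall w, enorm (w - x) < r -> C w) ->
  8 * eta * enorm x < del * r -> r / 4 <= `|p|.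
Proof.
move=> hdel hPC hx r hr hball h8.
rewrite leNgt; apply/negP => hp.
have hp' : - (r / 4) < p /\ p < r / 4 by move: hp; rewrite ltr_norml; case/andP.
case: hp' => hp1 hp2.
set s := r / 2.
have hy1 : C (x + s *: v).
  by apply: hball; rewrite addrAC subrr add0r enormZ hv mulr1 ger0_norm /s; lra.
have hy2 : C (x + (- s) *: v).
  by apply: hball; rewrite addrAC subrr add0r enormZ hv mulr1 normrN ger0_norm /s; lra.
have [sn [hsn [hc1 hc2]]] := sign_g hn0 hconv hcone hpos hpres hy1 hy2.
rewrite !decomp in hc1 hc2.
set G := g *m v in hc1 hc2; set X := g *m xp in hc1 hc2.
have hsg0 : sg != 0 by rewrite gt_eqF.
set u := (sn / sg) *: G.
have hu : enorm u = 1 by rewrite /u enormZ normrM hsn mul1r ger0_norm ?invr_ge0 ?(ltW hsig) // mulVf.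
have hps : 0 < p + s by rewrite /s; lra.
have hms : 0 < - (p + - s) by rewrite /s; lra.
set c1 := ((p + s) * sg)^-1 *: (sn *: ((p + s) *: G + X)).
set c2 := ((- (p + - s)) * sg)^-1 *: (sn *: ((p + - s) *: G + X)).
have hC1 : C c1 by apply: hcone hc1 _; rewrite invr_gt0 mulr_gt0.
have hC2 : C c2 by apply: hcone hc2 _; rewrite invr_gt0 mulr_gt0.
have hsn0 : sn != 0 by apply/eqP => h; rewrite h normr0 in hsn; lra.
have e1 : c1 - u = (((p + s) * sg)^-1 * sn) *: X.
  by rewrite /c1 /u lin_id1 // gt_eqF.
have e2 : c2 + u = (((- (p + - s)) * sg)^-1 * sn) *: X.
  rewrite /c2 /u -{2}(opprK (p + - s)) lin_id2 // gt_eqF //.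
have hX := gxp_le; rewrite -/X in hX.
have hx0 := enorm_ge0 x.
have bound : forall q : R, r / 4 < q -> `|(q * sg)^-1 * sn| * enorm X < del.
  move=> q hq; have hq0 : 0 < q by lra.
  rewrite normrM hsn mulr1 ger0_norm ?invr_ge0 ?mulr_ge0 ?(ltW hq0) ?(ltW hsig) //.
  rewrite mulrC ltr_pdivrMr ?mulr_gt0 //.
  apply: le_lt_trans hX _.
  have h1 : 2 * eta * enorm x < del * q.
    have : del * (r / 4) < del * q by rewrite ltr_pM2l.
    lra.
  have h2 : 2 * eta * enorm x * sg < del * q * sg by rewrite ltr_pM2r.
  rewrite -/sg; lra.
apply: (hPC u c1 c2 hu hC1 hC2).
  by rewrite e1 enormZ; apply: bound; rewrite /s; lra.
by rewrite e2 enormZ; apply: bound; rewrite /s; lra.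
Qed.


Lemma B_single (r : R) : 0 < r -> r / 4 <= `|p| ->
  pdist (g *m x) (g *m v) <= 16 * eta * enorm x / r.
Proof.
move=> hr hp.
have hp0 : 0 < `|p| by apply: lt_le_trans hp; lra.
have pn0 : p != 0 by rewrite -normr_gt0.
have e : g *m x = p *: (g *m v) + g *m xp.
  by have := decomp 0; rewrite scale0r addr0 addr0.
set G := g *m v in e *; set X := g *m xp in e *.
have Gn0 : G != 0 by apply/eqP => h; move: hsig; rewrite -/G h enorm0 ltxx.
have pGn0 : p *: G != 0 by rewrite scaler_eq0 negb_or pn0 Gn0.
have hb := hat_bound (g *m x) pGn0.
have e2 : g *m x - p *: G = X by rewrite e addrC addKr.
rewrite e2 enormZ -/sg in hb.
have hX := gxp_le; rewrite -/X in hX.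
have hx0 := enorm_ge0 x.
have hbd : 2 * enorm X / (`|p| * sg) <= 16 * eta * enorm x / r.
  have hps : 0 < `|p| * sg by apply: mulr_gt0.
  rewrite ler_pdivrMr // mulrAC ler_pdivlMr //.
  have h1 : 2 * enorm X * r <= 2 * (2 * eta * sg * enorm x) * r.
    by apply: ler_wpM2r; [lra|lra].
  apply: le_trans h1 _.
  have hh : 0 <= eta * enorm x * sg by apply: mulr_ge0; [apply: mulr_ge0; [exact: ltW|exact: hx0]|exact: ltW hsig].
  have h4 : r <= 4 * `|p| by lra.
  have h := ler_wpM2l hh h4.
  nra.
have ehat : hat (p *: G) = (p / `|p|) *: hat G.
  rewrite /hat enormZ !scalerA; congr (_ *: _).
  by field; rewrite gt_eqF ?hp0 // gt_eqF // enorm_gt0.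
have [hpos'|hneg'] := ltP 0 p.
  have e3 : p / `|p| = 1 by rewrite gtr0_norm // divff.
  rewrite e3 scale1r in ehat.
  by apply: le_trans (pdist_le1 _ _) _; rewrite -ehat; apply: le_trans hb hbd.
have hneg : p < 0 by rewrite lt_neqAle pn0 hneg'.
have e3 : p / `|p| = -1 by rewrite ltr0_norm // invrN mulrN divff.
rewrite e3 scaleN1r in ehat.
apply: le_trans (pdist_le2 _ _) _.
by rewrite -[hat G]opprK -ehat; apply: le_trans hb hbd.
Qed.
End Key.

Unset Implicit Arguments.

Theorem lemma7p1 (R : realType) (d : nat) (hd : (2 <= d)%N)
  (C : set 'cV[R]_d) (g : nat -> 'M[R]_d)
  (hC : properly_convex_cone C)
  (hSL : forall n, in_SLpm (g n))
  (hpres : forall n, preserves C (g n))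
  (hmu : forall M : R, exists N : nat, forall n, (N <= n)%N -> M < mu12 (g n))
  (w : nat -> 'cV[R]_d) (hw : forall n, longest_axis (g n) (w n))
  (x : 'cV[R]_d) (hx : C x) :
  forall u : 'cV[R]_d,
    proj_accum (fun n => g n *m x) u <-> proj_accum w u.
Proof.
case: hC => [[hne hn0] hopen hconv hcone [a ha]].
have [al [hpos hcl]] := sign_fix hn0 hconv hne ha.
have [del hdel hPC] := PC hpos hcl.
have [r [hr hball]] := hopen x hx.
have [vv hvv] := choice hw.
have hv1 n : enorm (vv n) = 1 by case: (hvv n).
have hwv n : w n = g n *m vv n by case: (hvv n) => _ [].
have hmax n u : enorm u = 1 -> enorm (g n *m u) <= enorm (g n *m vv n).
  by case: (hvv n) => _ [_]; apply.
have hsig n : 0 < enorm (g n *m vv n).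
  apply: enorm_gt0; apply/eqP => h.
  have hu : g n \in unitmx.
    rewrite unitmxE unitfE; apply/eqP => h0; have := hSL n; rewrite /in_SLpm h0 normr0.
    by move/eqP; rewrite eq_sym oner_eq0.
  have : vv n = 0 by rewrite -(mulKmx hu (vv n)) h mulmx0.
  by move=> h1; have := hv1 n; rewrite h1 enorm0 => /eqP; rewrite eq_sym oner_eq0.
have hx0 := enorm_ge0 x.
have conv : forall eps : R, 0 < eps -> exists N : nat, forall n, (N <= n)%N ->
    pdist (g n *m x) (w n) < eps.
  move=> eps heps.
  set m := Num.min del eps.
  have hm : 0 < m by rewrite lt_min hdel heps.
  have hmd : m <= del by rewrite ge_min lexx.
  have hme : m <= eps by rewrite ge_min lexx orbT.
  set eta := m * r / (16 * (enorm x + 1)).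
  have heta : 0 < eta by apply: divr_gt0; [apply: mulr_gt0|lra].
  have heta' : eta * (16 * (enorm x + 1)) = m * r by rewrite /eta divfK //; lra.
  have [N hN] := partA_seq hd hv1 hmax hmu heta.
  exists N => n hn.
  have hk := key_single hn0 hconv hcone hpos (hpres n) (hv1 n) (hsig n) heta (hN n hn) hdel hPC hx hr hball.
  have h8 : 8 * eta * enorm x < del * r.
    have : m * r <= del * r by rewrite ler_pM2r.
    nra.
  have hp := hk h8.
  have hB := B_single (hv1 n) (hsig n) heta (hN n hn) hr hp.
  rewrite hwv; apply: le_lt_trans hB _.
  rewrite ltr_pdivrMr //.
  have : m * r <= eps * r by rewrite ler_pM2r.
  nra.
move=> u; split => -[un0 hacc]; split => // eps heps N.
- have he2 : 0 < eps / 2 by apply: divr_gt0.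
  have [N1 hN1] := conv _ he2.
  have [n [hn hd1]] := hacc _ he2 (maxn N N1).
  exists n; split; first by apply: leq_trans hn; apply: leq_maxl.
  have := hN1 n (leq_trans (leq_maxr _ _) hn).
  have t := pdist_tri (w n) (g n *m x) u; rewrite (pdistC (w n) (g n *m x)) in t.
  move=> h; simpl in hd1; lra.
- have he2 : 0 < eps / 2 by apply: divr_gt0.
  have [N1 hN1] := conv _ he2.
  have [n [hn hd1]] := hacc _ he2 (maxn N N1).
  exists n; split; first by apply: leq_trans hn; apply: leq_maxl.
  have := hN1 n (leq_trans (leq_maxr _ _) hn).
  have t := pdist_tri (g n *m x) (w n) u.
  move=> h; simpl; lra.
Qed.
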